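(* Let $\mathcal{M}$ be a gridding matrix whose cell graph $G_\mathcal{M}$ is a tree containing no bumper-ended path. Then $G_\mathcal{M}$ contains a vertex $r$ such that for every vertex $q\ne r$, the path in $G_\mathcal{M}$ from $r$ to $q$, written $r=p_1,\dots,p_m=q$, does not end in a bumper, i.e., $(p_{m-1},q)$ is not a bumper.
   Context: A $k\times\ell$ gridding matrix $\mathcal{M}$ has permutation classes as entries ($i$ columns left to right, $j$ rows bottom to top). The cell graph $G_\mathcal{M}$ has as vertices the cells with infinite entries, adjacent when they share a row or column and all cells strictly between them are finite or empty; $\mathcal{M}_p$ denotes the entry at vertex $p$. For a permutation $\pi$ of length $n$ (diagram $\{(i,\pi_i)\}$), intervalicity of $A\subseteq[n]$ is the least number of disjoint integer intervals with union $A$, and grid-complexity of a point set is the maximum of the intervalicities of its two axis projections. The horizontal path-width of $\pi$ is the maximum over $i$ of the grid-complexity of $\{(1,\pi_1),\dots,(i,\pi_i)\}$; the vertical path-width is the maximum over $i$ of the grid-complexity of the set of points with values $1,\dots,i$. An ordered pair $(p,q)$ of vertices of $G_\mathcal{M}$ is a bumper if either $\mathcal{M}_q$ has unbounded horizontal path-width (over its members) and shares a column with $p$, or $\mathcal{M}_q$ has unbounded vertical path-width and shares a row with $p$. A bumper-ended path is a path $p_1,\dots,p_k$ in $G_\mathcal{M}$ with both $(p_2,p_1)$ and $(p_{k-1},p_k)$ bumpers. *)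

(* Defs.v *)
From mathcomp Require Import all_boot.
Set Implicit Arguments. Unset Strict Implicit. Unset Printing Implicit Defensive.

(* A permutation of length n is the word pi_1 ... pi_n, stored as a seq nat
   with pi_(j+1) = nth 0 s j; it must be a rearrangement of 1..n. *)
Definition is_perm (s : seq nat) : Prop := perm_eq s (iota 1 (size s)).

Definition contains (s t : seq nat) : Prop :=
  exists m : bitseq, size m = size s /\
    let u := mask m s in
    size u = size t /\
    forall i j, i < size t -> j < size t ->
      (nth 0 u i < nth 0 u j) = (nth 0 t i < nth 0 t j).

Definition is_perm_class (C : seq nat -> Prop) : Prop :=
  (forall s, C s -> is_perm s) /\
  (forall s t, C s -> is_perm t -> contains s t -> C t).

Definition infinite_class (C : seq nat -> Prop) : Prop :=
  ~ exists l : seq (seq nat), forall s, C s -> s \in l.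

Definition intervalicity_le (A : nat -> Prop) (c : nat) : Prop :=
  exists ivs : seq (nat * nat),
    size ivs <= c /\
    (forall iv, iv \in ivs -> iv.1 <= iv.2) /\
    (forall i j, i < size ivs -> j < size ivs -> i <> j ->
       forall x, ~ ((nth (0,0) ivs i).1 <= x <= (nth (0,0) ivs i).2 /\
                    (nth (0,0) ivs j).1 <= x <= (nth (0,0) ivs j).2)) /\
    (forall x, A x <-> exists2 iv, iv \in ivs & iv.1 <= x <= iv.2).

Definition grid_complexity_le (P : seq (nat * nat)) (c : nat) : Prop :=
  intervalicity_le (fun x => x \in map fst P) c /\
  intervalicity_le (fun y => y \in map snd P) c.

Definition diagram (s : seq nat) : seq (nat * nat) :=
  [seq (j.+1, nth 0 s j) | j <- iota 0 (size s)].

Definition hpw_le (s : seq nat) (c : nat) : Prop :=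
  forall i, i <= size s -> grid_complexity_le (take i (diagram s)) c.

Definition vpw_le (s : seq nat) (c : nat) : Prop :=
  forall i, i <= size s ->
    grid_complexity_le [seq p <- diagram s | p.2 <= i] c.

Definition unbounded_hpw (C : seq nat -> Prop) : Prop :=
  forall c, exists2 s, C s & ~ hpw_le s c.
Definition unbounded_vpw (C : seq nat -> Prop) : Prop :=
  forall c, exists2 s, C s & ~ vpw_le s c.

(* A k x l gridding matrix: M i j is the entry in column i (left to right)
   and row j (bottom to top). *)
Definition gridding (k l : nat) := 'I_k -> 'I_l -> seq nat -> Prop.

Definition cell (k l : nat) := ('I_k * 'I_l)%type.

Definition entry k l (M : gridding k l) (p : cell k l) := M p.1 p.2.

Definition is_vertex k l (M : gridding k l) (p : cell k l) : Prop :=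
  infinite_class (entry M p).

Definition strictly_between (a x b : nat) : bool := (a < x < b) || (b < x < a).

Definition adj k l (M : gridding k l) (p q : cell k l) : Prop :=
  is_vertex M p /\ is_vertex M q /\ p <> q /\
  ( (p.1 = q.1 /\ forall c : cell k l, c.1 = p.1 ->
        strictly_between p.2 c.2 q.2 -> ~ is_vertex M c)
  \/ (p.2 = q.2 /\ forall c : cell k l, c.2 = p.2 ->
        strictly_between p.1 c.1 q.1 -> ~ is_vertex M c)).

Fixpoint chain (T : Type) (R : T -> T -> Prop) (x : T) (s : seq T) : Prop :=
  if s is y :: s' then R x y /\ chain R y s' else True.

Definition gpath k l (M : gridding k l) (x : cell k l) (s : seq (cell k l)) : Prop :=
  is_vertex M x /\ chain (adj M) x s /\ uniq (x :: s).

(* cycles of length >= 3 *)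
Definition gcycle k l (M : gridding k l) (x : cell k l) (s : seq (cell k l)) : Prop :=
  gpath M x s /\ 2 <= size s /\ adj M (last x s) x.

Definition is_tree k l (M : gridding k l) : Prop :=
  (exists p, is_vertex M p) /\
  (forall p q, is_vertex M p -> is_vertex M q ->
     exists s, gpath M p s /\ last p s = q) /\
  (forall x s, ~ gcycle M x s).

Definition bumper k l (M : gridding k l) (p q : cell k l) : Prop :=
  is_vertex M p /\ is_vertex M q /\
  ((unbounded_hpw (entry M q) /\ p.1 = q.1) \/
   (unbounded_vpw (entry M q) /\ p.2 = q.2)).

Definition penult (T : Type) (x : T) (s : seq T) : T := last x (belast x s).

Definition bumper_ended_path k l (M : gridding k l)
    (p1 p2 : cell k l) (t : seq (cell k l)) : Prop :=
  gpath M p1 (p2 :: t) /\ bumper M p2 p1 /\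
  bumper M (penult p1 (p2 :: t)) (last p1 (p2 :: t)).

(* Main.v *)
Require Import Defs.
From mathcomp Require Import all_boot.
From mathcomp Require Import zify.
From Stdlib Require Import Classical.

Lemma chain_cat (T : Type) (R : T -> T -> Prop) x s1 s2 :
  chain R x (s1 ++ s2) <-> chain R x s1 /\ chain R (last x s1) s2.
Proof.
elim: s1 x => [|y s1 IH] x /=; first by tauto.
rewrite IH; tauto.
Qed.

Lemma walk_bt k l (M : gridding k l) (Hc : forall x s, ~ gcycle M x s) :
  forall w x, chain (adj M) x w -> ~~ uniq (x :: w) ->
  exists p1 u v p2, x :: w = p1 ++ [:: u, v, u & p2].
Proof.
elim=> [|y w IH] x /=; first by [].
move=> [Hxy Hch]; rewrite negb_and negbK.
case Hu: (uniq (y :: w)); last first.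
  move=> _; have [p1 [u [v [p2 E]]]] := IH y Hch (negbT Hu).
  by exists (x :: p1), u, v, p2; rewrite E.
move=> /orP [Hin|]; last by move: Hu => /= ->.
have Hch' : chain (adj M) x (y :: w) by [].
move: Hin Hu Hch'; case/splitPr => w1 w2 Hu Hch'.
case: w1 Hu Hch' => [|v w1] Hu Hch'.
  by case: Hch' => -[_ [_ [Hne _]]]; case: Hne.
case: w1 Hu Hch' => [|v' w1] Hu Hch'.
  by exists [::], x, v, w2.
exfalso; apply: (Hc x [:: v, v' & w1]).
have [Hc1 Hc2] := proj1 (@chain_cat _ (adj M) x [:: v, v' & w1] (x :: w2)) Hch'.
move: Hu; rewrite cat_uniq /= => /and3P [Hu1 Hd _].
split; [split; [|split]|split] => //.
- by case: Hch' => -[].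
- rewrite /= Hu1 andbT.
  by move: Hd; rewrite /= inE negb_or => /andP [? _].
- by case: Hc2.
Qed.

Lemma comb k l (M : gridding k l) (Hc : forall x s, ~ gcycle M x s) x s' b s2 :
  gpath M x (rcons s' b) -> gpath M b s2 ->
  (exists t, s2 = last x s' :: t) \/ uniq (x :: rcons s' b ++ s2).
Proof.
move=> [_ [Hch1 Hu1]] [_ [Hch2 Hu2]].
case Hu: (uniq (x :: rcons s' b ++ s2)); [by right|left].
have Hch : chain (adj M) x (rcons s' b ++ s2).
  by apply/chain_cat; rewrite last_rcons.
have [p1 [u [v [p2 E]]]] := @walk_bt _ _ M Hc _ _ Hch (negbT Hu).
have EW : x :: rcons s' b ++ s2 = (x :: s') ++ b :: s2 by rewrite cat_rcons.
rewrite EW in E.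
have Hu1' : uniq ((x :: s') ++ [:: b]) by rewrite cats1.
have Hsz : size (x :: s') + size (b :: s2) = size p1 + 3 + size p2.
  rewrite -size_cat E size_cat /=; lia.
have N1 : nth x ((x :: s') ++ b :: s2) (size p1) = u.
  by rewrite E nth_cat ltnn subnn.
have N2 : nth x ((x :: s') ++ b :: s2) (size p1 + 2) = u.
  by rewrite E nth_cat ifF ?addKn //; apply/negbTE; rewrite -leqNgt leq_addr.
have [Hlt|Hgt|Heq] := ltngtP (size p1) (size s').
- have := @nth_uniq _ x ((x :: s') ++ [:: b]) (size p1) (size p1 + 2).
  have Hs : size ((x :: s') ++ [:: b]) = size s' + 2 by rewrite size_cat /=; lia.
  rewrite Hs => /(_ ltac:(lia) ltac:(lia) Hu1').
  have C : forall i, i < size s' + 2 ->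
      nth x ((x :: s') ++ [:: b]) i = nth x ((x :: s') ++ b :: s2) i.
    move=> i Hi; rewrite !nth_cat; case: ifP => // Hi'.
    have -> : i - size (x :: s') = 0 by move: Hi Hi'; rewrite /=; lia.
    by [].
  rewrite !C ?N1 ?N2 ?eqxx; [|lia|lia].
  move=> H; symmetry in H; move/eqP: H; lia.
- have := @nth_uniq _ x (b :: s2) (size p1 - size s').-1 (size p1 + 2 - size s').-1.
  move: Hsz; rewrite /= => Hsz.
  have B1 : (size p1 - size s').-1 < size (b :: s2) by rewrite /=; lia.
  have B2 : (size p1 + 2 - size s').-1 < size (b :: s2) by rewrite /=; lia.
  move/(_ B1 B2 Hu2).
  move: N1 N2; rewrite !nth_cat /= !ifF; try (apply/negbTE; lia).
  have -> : size p1 - (size s').+1 = (size p1 - size s').-1 by lia.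
  have -> : size p1 + 2 - (size s').+1 = (size p1 + 2 - size s').-1 by lia.
  move=> -> ->; rewrite eqxx => H; symmetry in H; move/eqP: H; lia.
- have F : (size s' + 2 < (size s').+1) = false by apply/negP; lia.
  move: N1 N2; rewrite !nth_cat /= Heq ltnS leqnn F.
  have -> : size s' + 2 - (size s').+1 = 1 by lia.
  case: s2 {Hch Hu Hch2 Hu2 E EW} Hsz => [|y t] /=; first by lia.
  move=> _.
  move=> N1 N2; exists t; rewrite N2 -N1.
  by have := nth_last x (x :: s'); simpl => ->.
Qed.



Lemma last_vertex k l (M : gridding k l) r s :
  gpath M r s -> is_vertex M (last r s).
Proof.
move=> [Hr [Hch _]]; elim: s r Hr Hch => [|y s IH] r Hr //= [Hxy Hch].
by apply: IH Hch; case: Hxy => _ [].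
Qed.

Lemma penult_cat (T : Type) (x : T) s s2 : s2 <> [::] ->
  penult x (s ++ s2) = penult (last x s) s2.
Proof.
case: s2 => [//|y t] _; rewrite /penult belast_cat last_cat /=.
by [].
Qed.

Theorem mainTheorem14 (k l : nat) (M : gridding k l) :
  (forall i j, is_perm_class (M i j)) ->
  is_tree M ->
  (forall p1 p2 t, ~ bumper_ended_path M p1 p2 t) ->
  exists r : cell k l, is_vertex M r /\
    forall (q : cell k l) (s : seq (cell k l)),
      q <> r -> gpath M r s -> last r s = q ->
      ~ bumper M (penult r s) q.
Proof.
move=> _ [[r0 Hr0] [_ Hcyc]] Hnb.
apply: NNPP => Hno.
have Bad : forall r, is_vertex M r -> exists s, gpath M r s /\ s <> [::] /\
    bumper M (penult r s) (last r s).
  move=> r Hr; apply: NNPP => Hn; apply: Hno; exists r; split=> // q s Hq Hp Hl Hb.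
  apply: Hn; exists s; split=> //; split; last by rewrite Hl.
  by move=> E; apply: Hq; rewrite -Hl E.
have Grow : forall n, exists s, gpath M r0 s /\ s <> [::] /\
    bumper M (penult r0 s) (last r0 s) /\ n <= size s.
  elim=> [|n [s [Hp [Hne [Hb Hn]]]]].
    by have [s [? [? ?]]] := Bad r0 Hr0; exists s.
  have [s2 [Hp2 [Hne2 Hb2]]] := Bad (last r0 s) (@last_vertex _ _ M _ _ Hp).
  move: Hp Hne Hb Hn Hp2 Hb2; case/lastP: s => [|s' b] //.
  rewrite last_rcons => Hp _ Hb Hn Hp2 Hb2.
  have [[t Et]|Hu] := @comb _ _ M Hcyc _ _ _ _ Hp Hp2.
    exfalso; apply: (Hnb b (last r0 s') t); split; first by rewrite -Et.
    split; last by rewrite -Et.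
    by move: Hb; rewrite /penult belast_rcons.
  exists (rcons s' b ++ s2); split.
    split; first by [].
    split; last by [].
    apply/chain_cat; rewrite last_rcons; split; [by case: Hp => _ [] | by case: Hp2 => _ []].
  split; first by case: (s') => [|? ?].
  rewrite penult_cat // last_cat !last_rcons; split=> //.
  rewrite size_cat size_rcons; case: s2 {Hu Hp2 Hb2} Hne2 => [//|? ?] _ /=; move: Hn; rewrite size_rcons; lia.
have [s [[_ [_ Hu]] [_ [_ Hn]]]] := Grow #|{: cell k l}|.+1.
have := max_card (mem (r0 :: s)); rewrite (card_uniqP Hu) /= => H.
by move: (ltn_trans H Hn); rewrite ltnn.
Qed.
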